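(* Let $\Delta$ be a group and let $A, B$ be subgroups of $\Delta$ with $c(A,B) < \infty$. Then $\mathbf{C}_n(A, \Delta) \simeq \mathbf{C}_n(B, \Delta)$.
   Context: For subgroups $\Delta_1,\Delta_2$ of a group, $c(\Delta_1,\Delta_2) = [\Delta_1:\Delta_1\cap\Delta_2][\Delta_2:\Delta_1\cap\Delta_2]$. For $\Gamma \leq H$, $\mathbf{c}_k(\Gamma,H) \in \mathbb{N}\cup\{\infty\}$ is the cardinality of $\{\Delta \leq H : c(\Gamma,\Delta) = k\}$ and $\mathbf{C}_n(\Gamma,H) = \sum_{k=1}^n \mathbf{c}_k(\Gamma,H)$. For $f,g:\mathbb{N}\to\mathbb{N}\cup\{\infty\}$, $f \preceq g$ means there exists $C>0$ with $f(n) \leq C g(Cn)$ for all $n$; $f \simeq g$ means $f \preceq g$ and $g \preceq f$. *)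

(* Defs.v *)
From HB Require Import structures.
From mathcomp Require Import all_boot finmap.
From mathcomp Require Import boolp classical_sets cardinality.
Set Implicit Arguments. Unset Strict Implicit. Unset Printing Implicit Defensive.

Local Open Scope classical_set_scope.
Local Open Scope group_scope.

(** Extended naturals N ∪ {∞}: [Some n] is n, [None] is ∞. *)
Definition enat := option nat.

Definition ncard {T : choiceType} (A : set T) : enat :=
  if `[< finite_set A >] then Some (#|` fset_set A|)%fset else None.

Definition eadd (a b : enat) : enat :=
  match a, b with Some x, Some y => Some (x + y)%N | _, _ => None end.
Definition emul (a b : enat) : enat :=
  match a, b with Some x, Some y => Some (x * y)%N | _, _ => None end.
Definition ele (a b : enat) : bool :=
  match a, b with
  | Some x, Some y => (x <= y)%N
  | _, None => true
  | None, Some _ => false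
  end.

Section GroupDefs.
Variable G : groupType.

Definition subgroup (H : set G) : Prop := group_closed (mem H).

Definition lcoset (x : G) (K : set G) : set G := [set x * k | k in K].

Definition gindex (H K : set G) : enat := ncard [set lcoset x K | x in H].

Definition cc (D1 D2 : set G) : enat :=
  emul (gindex D1 (D1 `&` D2)) (gindex D2 (D1 `&` D2)).

Definition ck (k : nat) (Gam H : set G) : enat :=
  ncard [set D : set G | subgroup D /\ D `<=` H /\ cc Gam D = Some k].

Definition CC (n : nat) (Gam H : set G) : enat :=
  \big[eadd/Some 0%N]_(1 <= k < n.+1) ck k Gam H.

End GroupDefs.

Definition gpreceq (f g : nat -> enat) : Prop :=
  exists C : nat, (0 < C)%N /\ forall n, ele (f n) (emul (Some C) (g (C * n)%N)).

Definition gsimeq (f g : nat -> enat) : Prop := gpreceq f g /\ gpreceq g f.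

(* Main.v *)
Require Import Defs.
From HB Require Import structures.
From mathcomp Require Import all_boot finmap.
From mathcomp Require Import boolp classical_sets cardinality.
From mathcomp Require Import ring zify.
Set Implicit Arguments. Unset Strict Implicit. Unset Printing Implicit Defensive.
Local Open Scope classical_set_scope.
Local Open Scope card_scope.

Lemma ncard_fin {T : choiceType} (A : set T) :
  finite_set A -> ncard A = Some (#|` fset_set A|)%fset.
Proof. by move=> h; rewrite /ncard asboolT. Qed.

Lemma ncard_inf {T : choiceType} (A : set T) : ~ finite_set A -> ncard A = None.
Proof. by move=> h; rewrite /ncard asboolF. Qed.

Lemma ncard_le {T U : choiceType} (A : set T) (B : set U) :
  A #<= B -> ele (ncard A) (ncard B).
Proof.
move=> AB; have [fB|iB] := pselect (finite_set B); last first.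
  by rewrite (ncard_inf iB); case: (ncard A).
have /finite_setP[n Bn] := fB.
have An : A #<= `I_n.
  by apply: card_le_trans AB _; move: Bn; rewrite card_eq_le => /andP[].
have fA : finite_set A by apply/finite_set_leP; exists n.
rewrite (ncard_fin fA) (ncard_fin fB) /= (card_fset_set Bn).
exact: geq_card_fset_set.
Qed.

Lemma ncard_sub {T : choiceType} (A B : set T) : A `<=` B -> ele (ncard A) (ncard B).
Proof. by move=> h; apply: ncard_le; apply: subset_card_le. Qed.

Lemma ncard_img {T U : choiceType} (f : T -> U) (A : set T) :
  ele (ncard (f @` A)) (ncard A).
Proof. apply: ncard_le; exact: card_image_le. Qed.

Lemma ele_trans a b c : ele a b -> ele b c -> ele a c.
Proof. by case: a; case: b; case: c => //= x y z; apply: leq_trans. Qed.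

Lemma ncard_le_img {T : Type} {U V : choiceType} (S : set T) (f : T -> V) (g : T -> U) :
  (forall x y, S x -> S y -> g x = g y -> f x = f y) ->
  ele (ncard (f @` S)) (ncard (g @` S)).
Proof.
move=> H.
have [[x0 Sx0]|nS] := pselect (exists x, S x); last first.
  have -> : f @` S = set0.
    by apply/seteqP; split => // y [x Sx _]; apply: nS; exists x.
  rewrite ncard_fin ?fset_set0 ?cardfs0; last exact: finite_set0.
  by case: (ncard _).
pose h (u : U) : V := match pselect (exists x, S x /\ g x = u) with
  | left p => f (projT1 (cid p)) | right _ => f x0 end.
have -> : f @` S = h @` (g @` S).
  apply/seteqP; split => v.
    move=> [x Sx <-]; exists (g x); first by exists x.
    rewrite /h; case: pselect => [p|]; last by case; exists x.
    by case: cid => y [Sy gy] /=; apply: H.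
  move=> [u [x Sx <-] <-]; rewrite /h; case: pselect => [p|]; last by case; exists x.
  by case: cid => y [Sy gy] /=; exists y.
exact: ncard_img.
Qed.

Lemma cardfsM_le {K K' : choiceType} (A : {fset K}) (E : {fset K'}) :
  (#|` (A `*` E)%fset| <= #|` A| * #|` E|)%N.
Proof.
have sub : (A `*` E `<=` [fset z in [seq (x, y) | x <- A, y <- E]])%fset.
  apply/fsubsetP => -[x y]; rewrite in_fsetM /= => /andP[xA yE].
  by rewrite !inE /=; apply/allpairsP; exists (x, y).
apply: leq_trans (fsubset_leq_card sub) _.
by rewrite card_fseq (leq_trans (size_undup _)) // size_allpairs.
Qed.

Lemma ncard_prod {T U : choiceType} (Z : set (T * U)) (X : set T) (Y : set U) :
  Z `<=` X `*` Y -> ele (ncard Z) (emul (ncard X) (ncard Y)).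
Proof.
move=> ZXY.
have [fX|iX] := pselect (finite_set X); last by rewrite (ncard_inf iX); case: (ncard Z).
have [fY|iY] := pselect (finite_set Y); last first.
  by rewrite (ncard_inf iY); case: (ncard Z); case: (ncard X).
apply: ele_trans (ncard_sub ZXY) _.
rewrite (ncard_fin fX) (ncard_fin fY) ncard_fin; last exact: finite_setX.
by rewrite /= fset_setX //; apply: cardfsM_le.
Qed.

Lemma ncardU {T : choiceType} (X Y : set T) : X `&` Y = set0 ->
  ncard (X `|` Y) = eadd (ncard X) (ncard Y).
Proof.
move=> XY.
have [fX|iX] := pselect (finite_set X); last first.
  rewrite (ncard_inf iX) ncard_inf //; by rewrite finite_setU => -[].
have [fY|iY] := pselect (finite_set Y); last first.
  rewrite (ncard_inf iY) ncard_inf; first by case: (ncard X).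
  by rewrite finite_setU => -[].
rewrite (ncard_fin fX) (ncard_fin fY) ncard_fin ?finite_setU //=.
rewrite fset_setU // cardfsU -fset_setI // XY fset_set0 cardfs0 subn0 //.
Qed.

Local Open Scope group_scope.
Section Grp.
Variable G : groupType.
Implicit Types (H K X Y Z : set G) (x y : G).

Lemma sgP H : subgroup H <-> H 1 /\ (forall x y, H x -> H y -> H (x / y)).
Proof.
rewrite /subgroup /group_closed in_setE; split => -[h1 h2]; split => //.
  by move=> x y hx hy; have := h2 x y; rewrite !in_setE; apply.
by move=> x y; rewrite !in_setE; apply: h2.
Qed.

Lemma sg1 H : subgroup H -> H 1.
Proof. by case/sgP. Qed.

Lemma sgV H x : subgroup H -> H x -> H x^-1.
Proof. by case/sgP => h1 h2 hx; have := h2 1 x h1 hx; rewrite mul1g. Qed.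

Lemma sgM H x y : subgroup H -> H x -> H y -> H (x * y).
Proof.
move=> hH hx hy; case/sgP: hH => h1 h2.
by have := h2 x y^-1 hx (sgV (proj2 (sgP H) (conj h1 h2)) hy); rewrite invgK.
Qed.

Lemma sgI H K : subgroup H -> subgroup K -> subgroup (H `&` K).
Proof.
move=> /sgP[h1 h2] /sgP[k1 k2]; apply/sgP; split => // x y [hx kx] [hy ky].
by split; [apply: h2|apply: k2].
Qed.

Lemma lcosetP K x y : subgroup K ->
  lcoset x K = lcoset y K <-> K (x^-1 * y).
Proof.
move=> sK; split => [e|kc].
  have : lcoset y K y by exists 1; rewrite ?mulg1 //; apply: sg1.
  by rewrite -e => -[k kK <-]; rewrite mulKg.
apply/seteqP; split => z [k kK <-].
  exists ((x^-1 * y)^-1 * k); first by apply: sgM => //; apply: sgV.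
  by rewrite mulgA invgM invgK mulgA mulgV mul1g.
exists (x^-1 * y * k); first by apply: sgM.
by rewrite !mulgA mulgV mul1g.
Qed.

Lemma mem_lcoset K x : subgroup K -> lcoset x K x.
Proof. by move=> sK; exists 1; rewrite ?mulg1 //; apply: sg1. Qed.

Definition rep (C : set G) : G :=
  match pselect (exists y, C y) with
  | left p => projT1 (cid p) | right _ => 1 end.

Lemma repP (C : set G) y : C y -> C (rep C).
Proof.
move=> Cy; rewrite /rep; case: pselect => [p|]; last by case; exists y.
by case: cid.
Qed.

Lemma idx_le X Y Z : subgroup X -> subgroup Y -> subgroup Z ->
  ele (gindex X (X `&` Z)) (emul (gindex X (X `&` Y)) (gindex Y (Y `&` Z))).
Proof.
move=> sX sY sZ.
have sXY := sgI sX sY; have sYZ := sgI sY sZ; have sXZ := sgI sX sZ.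
pose g x := (lcoset x (X `&` Y), lcoset ((rep (lcoset x (X `&` Y)))^-1 * x) (Y `&` Z)).
have repk x : exists2 k, (X `&` Y) k & rep (lcoset x (X `&` Y)) = x * k.
  have := repP (mem_lcoset x sXY); move=> [k kK <-]; by exists k.
apply: ele_trans (ncard_le_img (g := g) _) _.
  move=> x y Xx Xy [e1]; rewrite e1 => /(lcosetP _ _ sYZ).
  rewrite invgM invgK mulgA mulgK => -[_ Zc].
  apply/(lcosetP _ _ sXZ); split => //; apply: sgM => //; exact: sgV.
apply: ncard_prod => -[u v] [x Xx [<- <-]]; split => /=; first by exists x.
exists ((rep (lcoset x (X `&` Y)))^-1 * x) => //.
  have [k [_ Yk] ->] := repk x. rewrite invgM mulgVK.
exact: sgV.
Qed.

Lemma gindex_gt0 X K n : subgroup X -> gindex X K = Some n -> (0 < n)%N.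
Proof.
move=> sX; rewrite /gindex.
set S := [set lcoset x K | x in X].
have [fS|iS] := pselect (finite_set S); last by rewrite ncard_inf.
rewrite ncard_fin // => -[<-]; rewrite cardfs_gt0; apply/eqP => e.
have := fset_set_set0 fS e; move/seteqP => -[+ _] => /(_ (lcoset 1 K)).
by apply; exists 1 => //; apply: sg1.
Qed.

Lemma ccC (A B : set G) : cc A B = cc B A.
Proof. by rewrite /cc setIC; case: (gindex A _); case: (gindex B _) => // ? ?; rewrite /= mulnC. Qed.

Lemma ele_Some a n : ele a (Some n) -> exists2 m, a = Some m & (m <= n)%N.
Proof. by case: a => //= m h; exists m. Qed.

Lemma cc_tri (A B D : set G) a k : subgroup A -> subgroup B -> subgroup D ->
  cc A B = Some a -> cc A D = Some k ->
  exists2 m, cc B D = Some m & (0 < m <= a * k)%N.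
Proof.
move=> sA sB sD; rewrite /cc.
case E1: (gindex A (A `&` B)) => [p1|] //; case E2: (gindex B (A `&` B)) => [p2|] //= [<-].
case E3: (gindex A (A `&` D)) => [q1|] //; case E4: (gindex D (A `&` D)) => [q2|] //= [<-].
have h1 := idx_le sB sA sD. rewrite [B `&` A]setIC E2 E3 /= in h1.
have h2 := idx_le sD sA sB; rewrite [D `&` A]setIC E4 E1 /= in h2.
have [m1 e1 l1] := ele_Some h1; have [m2 e2 l2] := ele_Some h2.
rewrite e1 [B `&` D]setIC e2 /=; exists (m1 * m2)%N => //.
rewrite muln_gt0 (gindex_gt0 sB e1) (gindex_gt0 sD e2) /=.
apply: leq_trans (leq_mul l1 l2) _.
apply: eq_leq; ring.
Qed.

End Grp.
Local Close Scope group_scope.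
Section Fin.
Variable G : groupType.

Definition SS (m n : nat) (Gam H : set G) :=
  [set D : set G | subgroup D /\ D `<=` H /\ exists2 k, (m <= k < n)%N & cc Gam D = Some k].

Lemma bigSS m n Gam H :
  \big[eadd/Some 0%N]_(m <= k < n) ck k Gam H = ncard (SS m n Gam H).
Proof.
move e: (n - m)%N => d; elim: d m e => [|d IH] m e.
  rewrite big_geq; last by lia.
  have -> : SS m n Gam H = set0.
    apply/seteqP; split => // D [_ [_ [k /andP[mk kn] _]]].
    by move: e; have := leq_ltn_trans mk kn; lia.
  by rewrite ncard_fin ?fset_set0 ?cardfs0 //; exact: finite_set0.
have mn : (m < n)%N by lia.
rewrite big_ltn // IH; last by lia.
have -> : SS m n Gam H =
   [set D : set G | subgroup D /\ D `<=` H /\ cc Gam D = Some m] `|` SS m.+1 n Gam H.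
  apply/seteqP; split => D.
    move=> [sD [DH [k /andP[mk kn] ck]]].
    move: mk; rewrite leq_eqVlt => /orP[/eqP mk|mk]; first by left; rewrite mk.
    by right; split => //; split => //; exists k => //; rewrite mk.
  move=> [[sD [DH ck]]|[sD [DH [k /andP[mk kn] ck]]]].
    by split => //; split => //; exists m => //; rewrite leqnn.
  split => //; split => //; exists k => //; rewrite kn (ltnW mk).
  done.
rewrite ncardU //; apply/seteqP; split => // D [[_ [_ c1]] [_ [_ [k /andP[mk _] c2]]]].
by move: mk; rewrite c1 in c2; case: c2 => ->; rewrite ltnn.
Qed.

Lemma CCE n Gam H : CC n Gam H = ncard (SS 1 n.+1 Gam H).
Proof. exact: bigSS. Qed.

End Fin.

Lemma ele_emul a x y : (0 < a)%N -> ele x y -> ele x (emul (Some a) y).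
Proof.
case: x; case: y => //= y x a0 xy; apply: leq_trans xy _.
by rewrite leq_pmull.
Qed.

Lemma half (G : groupType) (A B : set G) a :
  subgroup A -> subgroup B -> cc A B = Some a ->
  gpreceq (fun n => CC n A setT) (fun n => CC n B setT).
Proof.
move=> sA sB e.
have a0 : (0 < a)%N.
  move: e; rewrite /cc.
  case E1: (gindex A (A `&` B)) => [p1|] //; case E2: (gindex B (A `&` B)) => [p2|] //= [<-].
  by rewrite muln_gt0 (gindex_gt0 sA E1) (gindex_gt0 sB E2).
exists a; split => // n; apply: ele_emul => //.
rewrite !CCE; apply: ncard_sub => D [sD [DH [k /andP[k1 kn] ck]]].
have [m e2 /andP[m0 mk]] := cc_tri sA sB sD e ck.
split => //; split => //; exists m => //; rewrite m0 /=.
rewrite ltnS; apply: leq_trans mk _; rewrite leq_mul2l -ltnS kn orbT //.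
Qed.

Theorem proposition2 (G : groupType) (A B : set G) :
  subgroup A -> subgroup B -> cc A B <> None ->
  gsimeq (fun n => CC n A setT) (fun n => CC n B setT).
Proof.
move=> sA sB; case e: (cc A B) => [a|] // _.
split; first exact: half e.
by apply: (half sB sA (a := a)); rewrite ccC.
Qed.
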